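(* In the two-dimensional perturbed elephant random walk with stops, assume $\epsilon+r\neq1$, and let $C=\frac{r}{(\epsilon+r)\Gamma(1-\epsilon-r)}$. Then for all $t\ge1$, $\mathbb{E}[|\boldsymbol\sigma_t|^2]=C\frac{\Gamma(t-\epsilon-r)}{\Gamma(t)}+\frac{\epsilon}{\epsilon+r}$. If moreover $\gamma\in(-\tfrac12,1)$, $\gamma\neq\tfrac12$ and $2\gamma\neq1-\epsilon-r$, then for all $t\ge1$ $$\mathbb{E}[|\boldsymbol X_t|^2]=\frac{\epsilon}{(1-2\gamma)(\epsilon+r)}\,t+\frac{C}{1-\epsilon-r-2\gamma}\,\frac{\Gamma(t+1-\epsilon-r)}{\Gamma(t)}+D\,\frac{\Gamma(t+2\gamma)}{\Gamma(t)},$$ where $D=-\dfrac{1}{\Gamma(2\gamma)}\Big[\dfrac{\epsilon}{(\epsilon+r)(1-2\gamma)}+\dfrac{r}{(\epsilon+r)(1-\epsilon-r-2\gamma)}\Big]$ (with $1/\Gamma(0)=0$ when $\gamma=0$).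
   Context: Two-dimensional perturbed elephant random walk with stops: let $\mathbf i,\mathbf j$ be the standard basis of $\mathbb R^2$, $I$ the identity matrix and $A=\begin{bmatrix}0&-1\\1&0\end{bmatrix}$ (rotation by $\pi/2$). Fix $p,q,p',q',r\in(0,1)$ with $p+q+p'+q'+r=1$, $\epsilon\in(0,1)$, and $s_1,\dots,s_4\in(0,1)$ with $s_1+s_2+s_3+s_4=1$; set $\gamma=p-q$, $\gamma'=p'-q'$. Steps $\boldsymbol\sigma_t\in\{\mathbf i,\mathbf j,-\mathbf i,-\mathbf j,\mathbf 0\}$, $\boldsymbol X_0=\mathbf 0$, $\boldsymbol X_t=\boldsymbol\sigma_1+\dots+\boldsymbol\sigma_t$. The first step equals $\mathbf i,\mathbf j,-\mathbf i,-\mathbf j$ with probabilities $s_1,s_2,s_3,s_4$. For $t\ge1$, conditionally on $\boldsymbol\sigma_1,\dots,\boldsymbol\sigma_t$, choose $k\in\{1,\dots,t\}$ uniformly at random. If $|\boldsymbol\sigma_k|=1$, then $\boldsymbol\sigma_{t+1}$ equals $\boldsymbol\sigma_k$, $-\boldsymbol\sigma_k$, $A\boldsymbol\sigma_k$, $A^{-1}\boldsymbol\sigma_k$, $\mathbf 0$ with probabilities $p,q,p',q',r$ respectively. If $\boldsymbol\sigma_k=\mathbf 0$, then $\boldsymbol\sigma_{t+1}$ equals each of $\mathbf i,\mathbf j,-\mathbf i,-\mathbf j$ with probability $\epsilon/4$ and $\mathbf 0$ with probability $1-\epsilon$. *)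

(* Defs.v *)
From Stdlib Require Import Reals ZArith List ClassicalEpsilon.
Import ListNotations.
Open Scope R_scope.

(** Euler's Gamma function, defined by Gauss's limit formula
    Gamma x = lim_n n! n^x / (x (x+1) ... (x+n)),
    valid for every x that is not a nonpositive integer.
    (The value at nonpositive integers is irrelevant/unspecified.) *)
Definition gauss_seq (x : R) (n : nat) : R :=
  INR (fact n) * Rpower (INR n) x / prod_f_R0 (fun k => x + INR k) n.

Definition Gamma (x : R) : R :=
  epsilon (inhabits 0) (fun l => Un_cv (gauss_seq x) l).

Definition vec : Type := (Z * Z)%type.
Definition veq (u v : vec) : bool :=
  (Z.eqb (fst u) (fst v) && Z.eqb (snd u) (snd v))%bool.
Definition vzero : vec := (0%Z, 0%Z).
Definition vopp (u : vec) : vec := (Z.opp (fst u), Z.opp (snd u)).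
(* A = [[0,-1],[1,0]] : A(x,y) = (-y,x);  A^{-1}(x,y) = (y,-x) *)
Definition rotA (u : vec) : vec := (Z.opp (snd u), fst u).
Definition rotAinv (u : vec) : vec := (snd u, Z.opp (fst u)).
Definition vadd (u v : vec) : vec := (fst u + fst v, snd u + snd v)%Z.
Definition sqnorm (u : vec) : R := IZR (fst u * fst u + snd u * snd u).

Definition steps : list vec :=
  [(1,0); (0,1); (-1,0); (0,-1); (0,0)]%Z.

Definition first_law (s1 s2 s3 s4 : R) (v : vec) : R :=
  if veq v (1%Z, 0%Z) then s1
  else if veq v (0%Z, 1%Z) then s2
  else if veq v ((-1)%Z, 0%Z) then s3
  else if veq v (0%Z, (-1)%Z) then s4
  else 0.

(** Probability that sigma_{t+1} = v given that the remembered step is u. *)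
Definition kernel (p q p' q' r eps : R) (u v : vec) : R :=
  if veq u vzero then (if veq v vzero then 1 - eps else eps / 4)
  else if veq v u then p
  else if veq v (vopp u) then q
  else if veq v (rotA u) then p'
  else if veq v (rotAinv u) then q'
  else if veq v vzero then r
  else 0.

(** Probability of a history, given in REVERSE chronological order
    [sigma_t; sigma_{t-1}; ...; sigma_1].  Given sigma_1..sigma_t, the
    step sigma_{t+1} is drawn by choosing k uniformly in {1..t} and
    applying [kernel] to sigma_k. *)
Fixpoint rprob (p q p' q' r eps s1 s2 s3 s4 : R) (rh : list vec) : R :=
  match rh with
  | nil => 1
  | v :: nil => first_law s1 s2 s3 s4 v
  | v :: ((_ :: _) as rest) =>
      rprob p q p' q' r eps s1 s2 s3 s4 rest *
      (/ INR (length rest) *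
       fold_right (fun u acc => kernel p q p' q' r eps u v + acc) 0 rest)
  end.

Fixpoint rpaths (n : nat) : list (list vec) :=
  match n with
  | O => [nil]
  | S n => flat_map (fun h => map (fun v => v :: h) steps) (rpaths n)
  end.

Definition expect (p q p' q' r eps s1 s2 s3 s4 : R) (t : nat)
    (f : list vec -> R) : R :=
  fold_right
    (fun h acc => rprob p q p' q' r eps s1 s2 s3 s4 h * f h + acc)
    0 (rpaths t).

Definition erw_step (rh : list vec) : vec := hd vzero rh.
Definition erw_pos (rh : list vec) : vec := fold_right vadd vzero rh.

(* Main.v *)
Require Import Defs.
From Stdlib Require Import Reals Lra Lia ClassicalEpsilon.
From Coquelicot Require Import Coquelicot.
From Stdlib Require Import ZArith List.
Import ListNotations.
Open Scope R_scope.

Fixpoint Qp (x : R) (n : nat) : R :=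
  match n with O => 1 | S m => Qp x m * (1 + x / INR (S m)) end.

Lemma Qp_pos x n : -1 < x -> 0 < Qp x n.
Proof.
  intros Hx; induction n as [|n IH]; cbn [Qp]; [lra|].
  apply Rmult_lt_0_compat; [exact IH|].
  assert (H1 : 1 <= INR (S n)) by (apply (le_INR 1); lia).
  replace (1 + x / INR (S n)) with ((INR (S n) + x) / INR (S n)) by (field; lra).
  apply Rdiv_lt_0_compat; lra.
Qed.

Lemma prod_Q x n : prod_f_R0 (fun k => x + INR k) n = x * INR (Factorial.fact n) * Qp x n.
Proof.
  induction n as [|n IH].
  - simpl. lra.
  - cbn [prod_f_R0]. rewrite IH. cbn [Qp].
    change (Factorial.fact (S n)) with (S n * Factorial.fact n)%nat. rewrite mult_INR.
    assert (INR (S n) <> 0) by (apply not_0_INR; lia).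
    field. auto.
Qed.

Lemma gauss_Q x n : -1 < x -> x <> 0 ->
  gauss_seq x n = Rpower (INR n) x / (x * Qp x n).
Proof.
  intros H1 H2. unfold gauss_seq. rewrite prod_Q.
  pose proof (Qp_pos x n H1). pose proof (INR_fact_neq_0 n).
  field. repeat split; lra || auto.
Qed.

Lemma Qp_shift x n : (x + 1) * Qp (x + 1) n = (x + INR n + 1) * Qp x n.
Proof.
  induction n as [|n IH].
  - simpl. lra.
  - cbn [Qp]. assert (INR (S n) <> 0) by (apply not_0_INR; lia).
    rewrite S_INR in *.
    transitivity ((x + 1) * Qp (x + 1) n * (1 + (x + 1) / (INR n + 1))); [ring|].
    rewrite IH. field. auto.
Qed.

Lemma gauss_shift x n : -1 < x -> x <> 0 -> (1 <= n)%nat ->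
  gauss_seq (x + 1) n = gauss_seq x n * (x * (INR n / (INR n + (x + 1)))).
Proof.
  intros H1 H2 Hn. rewrite !gauss_Q by lra.
  assert (Hn' : 1 <= INR n) by (apply (le_INR 1); lia).
  rewrite Rpower_plus, Rpower_1 by lra.
  assert (E : Qp (x+1) n = (x + INR n + 1) * Qp x n / (x+1)).
  { rewrite <- Qp_shift. field. lra. }
  rewrite E. pose proof (Qp_pos x n H1).
  field. repeat split; lra.
Qed.

Lemma lim_ratio b : 0 < b -> is_lim_seq (fun n => INR n / (INR n + b)) 1.
Proof.
  intros Hb.
  apply is_lim_seq_ext_loc with (u := fun n => 1 / (1 + b * / INR n)).
  - exists 1%nat. intros n Hn.
    assert (1 <= INR n) by (apply (le_INR 1); lia).
    field. split; lra.
  - replace (Finite 1) with (Finite (1 / (1 + b * 0))) by (f_equal; field).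
    apply is_lim_seq_div'; [apply is_lim_seq_const| |lra].
    apply is_lim_seq_plus'; [apply is_lim_seq_const|].
    apply is_lim_seq_mult'; [apply is_lim_seq_const|].
    replace (Finite 0) with (Rbar_inv p_infty) by reflexivity.
    apply is_lim_seq_inv; [apply is_lim_seq_INR| discriminate].
Qed.

Definition okG x := -1 < x /\ exists l, l <> 0 /\ Un_cv (gauss_seq x) l.

Lemma Gamma_eq x l : Un_cv (gauss_seq x) l -> Gamma x = l.
Proof.
  intros H. unfold Gamma.
  pose proof (epsilon_spec (inhabits 0) (fun l => Un_cv (gauss_seq x) l) (ex_intro _ l H)) as H'.
  apply UL_sequence with (gauss_seq x); auto.
Qed.

Lemma ok_up x : okG x -> x <> 0 -> okG (x + 1) /\ Gamma (x + 1) = x * Gamma x.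
Proof.
  intros [Hx [l [Hl Hc]]] H0.
  assert (Hc2 : Un_cv (gauss_seq (x+1)) (l * (x * 1))).
  { apply is_lim_seq_Reals.
    apply is_lim_seq_ext_loc with (u := fun n => gauss_seq x n * (x * (INR n / (INR n + (x + 1))))).
    - exists 1%nat. intros n Hn. symmetry. apply gauss_shift; auto.
    - apply is_lim_seq_mult'; [apply is_lim_seq_Reals; exact Hc|].
      apply is_lim_seq_mult'; [apply is_lim_seq_const|]. apply lim_ratio. lra. }
  split.
  - split; [lra|]. exists (l * (x * 1)). split; [|exact Hc2].
    intro E. apply Rmult_integral in E. destruct E as [E|E]; [auto|]. lra.
  - rewrite (Gamma_eq _ _ Hc2), (Gamma_eq _ _ Hc). ring.
Qed.

Lemma ok_down x : -1 < x -> x <> 0 -> okG (x + 1) -> okG x.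
Proof.
  intros Hx H0 [_ [l [Hl Hc]]].
  split; [lra|]. exists (l / (x * 1)). split.
  - unfold Rdiv. intro E. apply Rmult_integral in E. destruct E as [E|E]; [auto|].
    revert E. apply Rinv_neq_0_compat. lra.
  - apply is_lim_seq_Reals.
    apply is_lim_seq_ext_loc with (u := fun n => gauss_seq (x + 1) n / (x * (INR n / (INR n + (x + 1))))).
    + exists 1%nat. intros n Hn. rewrite gauss_shift by auto.
      assert (1 <= INR n) by (apply (le_INR 1); lia).
      field. repeat split; lra.
    + apply is_lim_seq_div'; [apply is_lim_seq_Reals; exact Hc| |lra].
      apply is_lim_seq_mult'; [apply is_lim_seq_const|]. apply lim_ratio. lra.
Qed.

Lemma exp_le a b : a <= b -> exp a <= exp b.
Proof. intros [H|H]; [left; apply exp_increasing; auto| right; subst; auto]. Qed.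

Lemma ln_le_sub1 z : 0 < z -> ln z <= z - 1.
Proof. intros Hz. pose proof (exp_ineq1_le (ln z)). rewrite exp_ln in H by lra. lra. Qed.

Lemma ln_diff_ge m : 0 < m -> 1 / (m + 1) <= ln (m + 1) - ln m.
Proof.
  intros Hm. pose proof (ln_le_sub1 (m / (m+1))) as H.
  assert (0 < m / (m+1)) by (apply Rdiv_lt_0_compat; lra).
  specialize (H H0). unfold Rdiv in H. rewrite ln_mult, ln_Rinv in H by (try apply Rinv_0_lt_compat; lra).
  replace (m * / (m + 1) - 1) with (- (1 / (m+1))) in H by (field; lra). lra.
Qed.

Lemma pow_step m x : 0 < m -> 0 < x ->
  Rpower m x * (1 + x / (m + 1)) <= Rpower (m + 1) x.
Proof.
  intros Hm Hx. unfold Rpower.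
  replace (x * ln (m + 1)) with (x * ln m + x * (ln (m+1) - ln m)) by ring.
  rewrite exp_plus. apply Rmult_le_compat_l; [left; apply exp_pos|].
  eapply Rle_trans; [|apply exp_ineq1_le].
  pose proof (ln_diff_ge m Hm).
  replace (x / (m+1)) with (x * (1 / (m+1))) by (field; lra).
  apply Rplus_le_compat_l. apply Rmult_le_compat_l; lra.
Qed.

Lemma factor_bound x k : 0 < x <= 1 -> 1 <= k ->
  exp (x * (ln (k + 2) - ln (k + 1))) <= 1 + x / k.
Proof.
  intros Hx Hk.
  assert (Hpos : 0 < 1 + x / k) by (assert (0 < x / k) by (apply Rdiv_lt_0_compat; lra); lra).
  rewrite <- (exp_ln (1 + x / k)) by exact Hpos.
  apply exp_le.
  assert (A : ln (k+2) - ln (k+1) <= 1 / (k+1)).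
  { pose proof (ln_le_sub1 ((k+2)/(k+1))) as H.
    assert (0 < (k+2)/(k+1)) by (apply Rdiv_lt_0_compat; lra).
    specialize (H H0). unfold Rdiv in H. rewrite ln_mult, ln_Rinv in H by (try apply Rinv_0_lt_compat; lra).
    replace ((k + 2) * / (k + 1) - 1) with (1 / (k+1)) in H by (field; lra). lra. }
  assert (B : x / (k + x) <= ln (1 + x / k)).
  { pose proof (ln_le_sub1 (/ (1 + x / k))) as H.
    assert (0 < / (1 + x/k)) by (apply Rinv_0_lt_compat; lra).
    specialize (H H0). rewrite ln_Rinv in H by lra.
    replace (/ (1 + x / k) - 1) with (- (x / (k + x))) in H by (field; lra). lra. }
  assert (C : x / (k + 1) <= x / (k + x)).
  { unfold Rdiv. apply Rmult_le_compat_l; [lra|]. apply Rinv_le_contravar; lra. }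
  assert (x * (ln (k + 2) - ln (k + 1)) <= x * (1 / (k+1))) by (apply Rmult_le_compat_l; lra).
  replace (x * (1 / (k+1))) with (x / (k+1)) in H by (field; lra). lra.
Qed.

Lemma Qp_lower x n : 0 < x <= 1 -> exp (x * (ln (INR n + 2) - ln 2)) <= Qp x n.
Proof.
  intros Hx. induction n as [|n IH].
  - cbn [Qp]. simpl INR. replace (x * (ln (0 + 2) - ln 2)) with 0 by (rewrite Rplus_0_l; ring).
    rewrite exp_0. lra.
  - cbn [Qp]. rewrite S_INR.
    replace (x * (ln (INR n + 1 + 2) - ln 2)) with
      (x * (ln (INR n + 2) - ln 2) + x * (ln (INR n + 1 + 2) - ln (INR n + 1 + 1))) by
      (replace (INR n + 1 + 1) with (INR n + 2) by ring; ring).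
    rewrite exp_plus. apply Rmult_le_compat; try (left; apply exp_pos); auto.
    apply factor_bound; auto. pose proof (pos_INR n); lra.
Qed.

Lemma ok_base x : 0 < x <= 1 -> okG x.
Proof.
  intros Hx. split; [lra|].
  set (L := fun n => gauss_seq x (S n)).
  assert (HL : forall n, L n = Rpower (INR n + 1) x / (x * Qp x (S n))).
  { intro n. unfold L. rewrite gauss_Q by lra. rewrite S_INR. reflexivity. }
  assert (Hg : Un_growing L).
  { intro n. rewrite !HL. cbn [Qp] . pose proof (pos_INR n).
    pose proof (Qp_pos x n ltac:(lra)).
    set (Q := Qp x n). change (Qp x n) with Q in H0.
    rewrite !S_INR.
    assert (P1 : 0 < 1 + x / (INR n + 1)) by (assert (0 < x / (INR n + 1)) by (apply Rdiv_lt_0_compat; lra); lra).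
    assert (P2 : 0 < 1 + x / (INR n + 1 + 1)) by (assert (0 < x / (INR n + 1 + 1)) by (apply Rdiv_lt_0_compat; lra); lra).
    pose proof (pow_step (INR n + 1) x ltac:(lra) ltac:(lra)) as PS.
    unfold Rdiv at 1 3. apply Rle_trans with (Rpower (INR n + 1) x * (1 + x / (INR n + 1 + 1)) * / (x * (Q * (1 + x / (INR n + 1)) * (1 + x / (INR n + 1 + 1))))).
    + right. field. repeat split; lra.
    + apply Rmult_le_compat_r; [|exact PS].
      left. apply Rinv_0_lt_compat. repeat apply Rmult_lt_0_compat; lra. }
  assert (Hb : has_ub L).
  { exists (exp (x * ln 2) / x). intros y [n ->]. rewrite HL.
    pose proof (pos_INR n). pose proof (Qp_lower x (S n) Hx) as QL. rewrite S_INR in QL.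
    pose proof (exp_pos (x * (ln (INR n + 1 + 2) - ln 2))).
    unfold Rpower. unfold Rdiv.
    apply Rle_trans with (exp (x * ln (INR n + 1)) * / (x * exp (x * (ln (INR n + 1 + 2) - ln 2)))).
    - apply Rmult_le_compat_l; [left; apply exp_pos|].
      apply Rinv_le_contravar; [apply Rmult_lt_0_compat; lra|]. apply Rmult_le_compat_l; lra.
    - replace (exp (x * ln (INR n + 1)) * / (x * exp (x * (ln (INR n + 1 + 2) - ln 2))))
        with (exp (x * ln 2 + x * (ln (INR n + 1) - ln (INR n + 1 + 2))) * / x).
      2:{ rewrite exp_plus. replace (x * (ln (INR n + 1) - ln (INR n + 1 + 2))) with
            (x * ln (INR n + 1) - x * (ln (INR n + 1 + 2) - ln 2) - x * ln 2) by ring.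
          unfold Rminus. rewrite !exp_plus, !exp_Ropp. field. split; [|split; [lra|]].
          all: apply Rgt_not_eq; apply exp_pos. }
      apply Rmult_le_compat_r; [left; apply Rinv_0_lt_compat; lra|].
      apply exp_le. assert (ln (INR n + 1) <= ln (INR n + 1 + 2)) by (apply ln_le; lra).
      assert (x * (ln (INR n + 1) - ln (INR n + 1 + 2)) <= 0).
      { replace 0 with (x * 0) by ring. apply Rmult_le_compat_l; lra. }
      lra. }
  destruct (growing_cv L Hg Hb) as [l Hl].
  exists l. split.
  - pose proof (growing_ineq L l Hg Hl 0%nat). rewrite HL in H.
    assert (0 < Rpower (INR 0 + 1) x / (x * Qp x 1)).
    { apply Rdiv_lt_0_compat; [apply exp_pos|]. apply Rmult_lt_0_compat; [lra|]. apply Qp_pos; lra. }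
    lra.
  - apply is_lim_seq_Reals. apply is_lim_seq_incr_1. apply is_lim_seq_Reals. exact Hl.
Qed.

Fixpoint Pm (b : R) (m : nat) : R :=
  match m with O => 1 | S k => Pm b k * (b + INR k) end.

Lemma Gamma_shift_m b m : okG b -> b <> 0 ->
  okG (b + INR m) /\ Gamma (b + INR m) = Gamma b * Pm b m.
Proof.
  intros Hb H0. induction m as [|m [IH1 IH2]].
  - simpl. rewrite Rplus_0_r. split; auto. ring.
  - rewrite S_INR. replace (b + (INR m + 1)) with ((b + INR m) + 1) by ring.
    assert (b + INR m <> 0).
    { destruct Hb as [Hb _]. destruct m; [simpl; rewrite Rplus_0_r; auto|].
      pose proof (pos_INR m). rewrite S_INR. lra. }
    destruct (ok_up _ IH1 H) as [A B]. split; auto.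
    rewrite B, IH2. cbn [Pm]. ring.
Qed.

Lemma Pm_pos1 n : 0 < Pm 1 n.
Proof. induction n; cbn [Pm]; [lra|]. pose proof (pos_INR n). nra. Qed.

Lemma Pm_0 n : Pm 0 (S n) = 0.
Proof. induction n; cbn [Pm] in *; [simpl; ring|]. rewrite IHn. ring. Qed.

Lemma Qp_1 n : Qp 1 n = INR n + 1.
Proof.
  induction n; cbn [Qp]; [simpl; ring|]. rewrite IHn, S_INR.
  field. pose proof (pos_INR n). lra.
Qed.

Lemma ok_1 : okG 1 /\ Gamma 1 = 1.
Proof.
  assert (H : Un_cv (gauss_seq 1) 1).
  { apply is_lim_seq_Reals.
    apply is_lim_seq_ext_loc with (u := fun n => INR n / (INR n + 1)); [|apply lim_ratio; lra].
    exists 1%nat. intros n Hn. rewrite gauss_Q by lra. rewrite Qp_1, Rpower_1; [field; pose proof (pos_INR n); lra|].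
    apply (lt_INR 0); lia. }
  split; [split; [lra|exists 1; split; [lra|exact H]]|]. apply Gamma_eq; exact H.
Qed.

Lemma Gamma_nat n : Gamma (INR (S n)) = Pm 1 n.
Proof.
  destruct ok_1 as [A B].
  replace (INR (S n)) with (1 + INR n) by (rewrite S_INR; ring).
  destruct (Gamma_shift_m 1 n A ltac:(lra)) as [_ E]. rewrite E, B. ring.
Qed.

Lemma ok_all b : -1 < b < 2 -> b <> 0 -> okG b.
Proof.
  intros Hb H0.
  destruct (Rlt_le_dec b 0) as [Hn|Hn].
  - apply ok_down; [lra|auto|]. apply ok_base. lra.
  - destruct (Rle_lt_dec b 1) as [H1|H1].
    + apply ok_base. lra.
    + replace b with ((b - 1) + 1) by ring. apply ok_up; [apply ok_base; lra|lra].
Qed.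

Lemma Gamma_nz b : okG b -> Gamma b <> 0.
Proof. intros [_ [l [Hl Hc]]]. rewrite (Gamma_eq _ _ Hc). auto. Qed.

Definition sumL {A : Type} (l : list A) (F : A -> R) : R :=
  fold_right (fun x acc => F x + acc) 0 l.

Lemma sumL_app {A} (l1 l2 : list A) F : sumL (l1 ++ l2) F = sumL l1 F + sumL l2 F.
Proof. induction l1; simpl; [ring|]. unfold sumL in *. simpl. rewrite IHl1. ring. Qed.

Lemma sumL_flat_map {A B} (g : A -> list B) l F :
  sumL (flat_map g l) F = sumL l (fun x => sumL (g x) F).
Proof. induction l; simpl; [reflexivity|]. rewrite sumL_app, IHl. reflexivity. Qed.

Lemma sumL_map {A B} (f : A -> B) l F : sumL (map f l) F = sumL l (fun x => F (f x)).
Proof. induction l; simpl; [reflexivity|]. unfold sumL in *; simpl; rewrite IHl; reflexivity. Qed.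

Lemma sumL_ext {A} (l : list A) F G : (forall x, In x l -> F x = G x) -> sumL l F = sumL l G.
Proof.
  induction l; intros H; simpl; [reflexivity|]. unfold sumL in *; simpl.
  rewrite H by (left; auto). rewrite IHl; auto. intros; apply H; right; auto.
Qed.

Lemma sumL_plus {A} (l : list A) F G : sumL l (fun x => F x + G x) = sumL l F + sumL l G.
Proof. induction l; unfold sumL in *; simpl; [ring|]. rewrite IHl. ring. Qed.

Lemma sumL_scal {A} (l : list A) c F : sumL l (fun x => c * F x) = c * sumL l F.
Proof. induction l; unfold sumL in *; simpl; [ring|]. rewrite IHl. ring. Qed.

Lemma sumL_swap {A B} (l1 : list A) (l2 : list B) F :
  sumL l1 (fun x => sumL l2 (fun y => F x y)) = sumL l2 (fun y => sumL l1 (fun x => F x y)).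
Proof.
  induction l1; simpl.
  - unfold sumL; induction l2; simpl; [reflexivity|]. unfold sumL in IHl2. rewrite <- IHl2. ring.
  - change (sumL (a :: l1) (fun x => sumL l2 (fun y => F x y))) with
      (sumL l2 (fun y => F a y) + sumL l1 (fun x => sumL l2 (fun y => F x y))).
    rewrite IHl1, <- sumL_plus. reflexivity.
Qed.

Lemma sumL_const {A} (l : list A) c : sumL l (fun _ => c) = INR (length l) * c.
Proof. induction l; unfold sumL in *; simpl length; [simpl; ring|]. simpl fold_right. rewrite IHl, S_INR. ring. Qed.

Definition dot (x v : vec) : R := IZR (fst x) * IZR (fst v) + IZR (snd x) * IZR (snd v).

Lemma K_sum1 p q p' q' r eps u : p + q + p' + q' + r = 1 -> In u steps ->
  sumL steps (fun v => kernel p q p' q' r eps u v) = 1.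
Proof.
  intros Hs Hu. simpl in Hu.
  destruct Hu as [<-|[<-|[<-|[<-|[<-|[]]]]]]; unfold sumL, steps, kernel, veq; simpl; lra.
Qed.

Lemma K_sum2 p q p' q' r eps u : p + q + p' + q' + r = 1 -> In u steps ->
  sumL steps (fun v => kernel p q p' q' r eps u v * sqnorm v) = eps + (1 - r - eps) * sqnorm u.
Proof.
  intros Hs Hu. simpl in Hu.
  destruct Hu as [<-|[<-|[<-|[<-|[<-|[]]]]]]; unfold sumL, steps, kernel, veq, sqnorm; simpl; lra.
Qed.

Lemma K_sum3 p q p' q' r eps u x : In u steps ->
  sumL steps (fun v => kernel p q p' q' r eps u v * dot x v) = (p - q) * dot x u + (p' - q') * dot (rotAinv x) u.
Proof.
  intros Hu. simpl in Hu.
  destruct Hu as [<-|[<-|[<-|[<-|[<-|[]]]]]]; unfold sumL, steps, kernel, veq, dot; simpl; rewrite ?opp_IZR; field.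
Qed.

Lemma sumL_scal_r {A} (l : list A) c F : sumL l F * c = sumL l (fun x => F x * c).
Proof. induction l; unfold sumL in *; simpl; [ring|]. rewrite <- IHl. ring. Qed.

Lemma rpaths_in t h : In h (rpaths t) -> length h = t /\ (forall u, In u h -> In u steps).
Proof.
  revert h; induction t as [|t IH]; intros h H.
  - simpl in H. destruct H as [<-|[]]. split; [reflexivity|intros u []].
  - cbn [rpaths] in H. apply in_flat_map in H. destruct H as [h0 [H0 H1]].
    apply in_map_iff in H1. destruct H1 as [v [<- Hv]].
    destruct (IH h0 H0) as [L M]. split; [simpl; rewrite L; reflexivity|].
    intros u [<-|Hu]; auto.
Qed.

Definition Wt p q p' q' r eps (h : list vec) (v : vec) : R :=
  / INR (length h) * sumL h (fun u => kernel p q p' q' r eps u v).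

Lemma expect_sumL p q p' q' r eps s1 s2 s3 s4 t f :
  expect p q p' q' r eps s1 s2 s3 s4 t f =
  sumL (rpaths t) (fun h => rprob p q p' q' r eps s1 s2 s3 s4 h * f h).
Proof. reflexivity. Qed.

Lemma E_step p q p' q' r eps s1 s2 s3 s4 t f : (1 <= t)%nat ->
  expect p q p' q' r eps s1 s2 s3 s4 (S t) f =
  expect p q p' q' r eps s1 s2 s3 s4 t
    (fun h => sumL steps (fun v => Wt p q p' q' r eps h v * f (v :: h))).
Proof.
  intros Ht. rewrite !expect_sumL. cbn [rpaths]. rewrite sumL_flat_map.
  apply sumL_ext. intros h Hh. rewrite sumL_map.
  destruct (rpaths_in t h Hh) as [L _].
  destruct h as [|a h']; [simpl in L; lia|].
  rewrite <- sumL_scal. apply sumL_ext. intros v _.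
  change (rprob p q p' q' r eps s1 s2 s3 s4 (v :: a :: h')) with
    (rprob p q p' q' r eps s1 s2 s3 s4 (a :: h') *
     (/ INR (length (a :: h')) * sumL (a :: h') (fun u => kernel p q p' q' r eps u v))).
  unfold Wt. ring.
Qed.

Lemma E_ext p q p' q' r eps s1 s2 s3 s4 t f g :
  (forall h, In h (rpaths t) -> f h = g h) ->
  expect p q p' q' r eps s1 s2 s3 s4 t f = expect p q p' q' r eps s1 s2 s3 s4 t g.
Proof. intros H. rewrite !expect_sumL. apply sumL_ext. intros h Hh. rewrite H; auto. Qed.

Lemma E_plus p q p' q' r eps s1 s2 s3 s4 t f g :
  expect p q p' q' r eps s1 s2 s3 s4 t (fun h => f h + g h) =
  expect p q p' q' r eps s1 s2 s3 s4 t f + expect p q p' q' r eps s1 s2 s3 s4 t g.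
Proof. rewrite !expect_sumL, <- sumL_plus. apply sumL_ext. intros; ring. Qed.

Lemma E_scal p q p' q' r eps s1 s2 s3 s4 t c f :
  expect p q p' q' r eps s1 s2 s3 s4 t (fun h => c * f h) =
  c * expect p q p' q' r eps s1 s2 s3 s4 t f.
Proof. rewrite !expect_sumL, <- sumL_scal. apply sumL_ext. intros; ring. Qed.

Lemma W_sum p q p' q' r eps h F :
  sumL steps (fun v => Wt p q p' q' r eps h v * F v) =
  / INR (length h) * sumL h (fun u => sumL steps (fun v => kernel p q p' q' r eps u v * F v)).
Proof.
  unfold Wt. rewrite <- sumL_swap, <- sumL_scal. apply sumL_ext. intros v _.
  rewrite Rmult_assoc, sumL_scal_r. reflexivity.
Qed.

Lemma W_one p q p' q' r eps h : p + q + p' + q' + r = 1 -> h <> nil ->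
  (forall u, In u h -> In u steps) ->
  sumL steps (fun v => Wt p q p' q' r eps h v * 1) = 1.
Proof.
  intros Hs Hn Hh. rewrite W_sum.
  rewrite (sumL_ext h _ (fun _ => 1)).
  - rewrite sumL_const. destruct h; [congruence|]. simpl length.
    field. apply not_0_INR. lia.
  - intros u Hu. transitivity (sumL steps (fun v => kernel p q p' q' r eps u v)).
    + apply sumL_ext. intros; ring.
    + apply K_sum1; auto.
Qed.

Lemma E_1 p q p' q' r eps s1 s2 s3 s4 f :
  expect p q p' q' r eps s1 s2 s3 s4 1 f =
  s1 * f [((1,0)%Z : vec)] + s2 * f [((0,1)%Z : vec)] + s3 * f [((-1,0)%Z : vec)] + s4 * f [((0,-1)%Z : vec)].
Proof. unfold expect, rpaths, steps; simpl; unfold first_law, veq; simpl. ring. Qed.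

Lemma E_one p q p' q' r eps s1 s2 s3 s4 t : p + q + p' + q' + r = 1 ->
  s1 + s2 + s3 + s4 = 1 -> (1 <= t)%nat ->
  expect p q p' q' r eps s1 s2 s3 s4 t (fun _ => 1) = 1.
Proof.
  intros Hs Hss Ht. induction t as [|t IH]; [lia|].
  destruct t as [|t].
  - unfold expect, rpaths, steps; simpl; unfold first_law, veq; simpl. lra.
  - rewrite E_step by lia.
    transitivity (expect p q p' q' r eps s1 s2 s3 s4 (S t) (fun _ => 1)); [|apply IH; lia].
    apply E_ext. intros h Hh.
    destruct (rpaths_in _ h Hh) as [L M]. cbv beta. apply W_one; auto.
    intros ->. simpl in L. lia.
Qed.

Lemma sum_dot y h : sumL h (fun u => dot y u) = dot y (erw_pos h).
Proof.
  induction h as [|a h IH].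
  - unfold sumL, erw_pos, dot, vzero; simpl. ring.
  - change (dot y a + sumL h (fun u => dot y u) = dot y (vadd a (erw_pos h))).
    rewrite IH. unfold dot, vadd; simpl. rewrite !plus_IZR. ring.
Qed.

Lemma sq_vadd v X : sqnorm (vadd v X) = sqnorm X + 2 * dot X v + sqnorm v.
Proof. unfold sqnorm, vadd, dot; simpl. rewrite !plus_IZR, !mult_IZR, !plus_IZR. ring. Qed.

Lemma dot_self X : dot X X = sqnorm X.
Proof. unfold sqnorm, dot. rewrite plus_IZR, !mult_IZR. ring. Qed.

Lemma dot_rot X : dot (rotAinv X) X = 0.
Proof. unfold dot, rotAinv; simpl. rewrite opp_IZR. ring. Qed.

Lemma A_step p q p' q' r eps s1 s2 s3 s4 t :
  p + q + p' + q' + r = 1 -> s1 + s2 + s3 + s4 = 1 -> (1 <= t)%nat ->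
  expect p q p' q' r eps s1 s2 s3 s4 (S t) (fun h => sqnorm (erw_step h)) =
  eps + (1 - r - eps) / INR t * expect p q p' q' r eps s1 s2 s3 s4 t (fun h => sumL h sqnorm).
Proof.
  intros Hs Hss Ht. rewrite E_step by lia.
  transitivity (expect p q p' q' r eps s1 s2 s3 s4 t
                  (fun h => eps * 1 + ((1 - r - eps) / INR t) * sumL h sqnorm)).
  - apply E_ext. intros h Hh. destruct (rpaths_in _ h Hh) as [L M].
    change (fun v => Wt p q p' q' r eps h v * sqnorm (erw_step (v :: h))) with
      (fun v => Wt p q p' q' r eps h v * sqnorm v).
    rewrite W_sum.
    rewrite (sumL_ext h _ (fun u => eps + (1 - r - eps) * sqnorm u))
      by (intros u Hu; apply K_sum2; auto).
    rewrite sumL_plus, sumL_const, sumL_scal, L.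
    assert (INR t <> 0) by (apply not_0_INR; lia). field. auto.
  - rewrite E_plus, !E_scal, E_one by auto. ring.
Qed.

Lemma S_step p q p' q' r eps s1 s2 s3 s4 t :
  p + q + p' + q' + r = 1 -> (1 <= t)%nat ->
  expect p q p' q' r eps s1 s2 s3 s4 (S t) (fun h => sumL h sqnorm) =
  expect p q p' q' r eps s1 s2 s3 s4 (S t) (fun h => sqnorm (erw_step h)) +
  expect p q p' q' r eps s1 s2 s3 s4 t (fun h => sumL h sqnorm).
Proof.
  intros Hs Ht. rewrite !E_step by lia. rewrite <- E_plus. apply E_ext.
  intros h Hh. destruct (rpaths_in _ h Hh) as [L M].
  transitivity (sumL steps (fun v => Wt p q p' q' r eps h v * sqnorm v +
                                      sumL h sqnorm * (Wt p q p' q' r eps h v * 1))).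
  - apply sumL_ext. intros v _.
    change (sumL (v :: h) sqnorm) with (sqnorm v + sumL h sqnorm). ring.
  - rewrite sumL_plus, sumL_scal, W_one; auto.
    + cbn [erw_step hd]. ring.
    + intros ->. simpl in L. lia.
Qed.

Lemma X_step p q p' q' r eps s1 s2 s3 s4 t :
  p + q + p' + q' + r = 1 -> (1 <= t)%nat ->
  expect p q p' q' r eps s1 s2 s3 s4 (S t) (fun h => sqnorm (erw_pos h)) =
  (1 + 2 * (p - q) / INR t) * expect p q p' q' r eps s1 s2 s3 s4 t (fun h => sqnorm (erw_pos h)) +
  expect p q p' q' r eps s1 s2 s3 s4 (S t) (fun h => sqnorm (erw_step h)).
Proof.
  intros Hs Ht. rewrite !E_step by lia. rewrite <- E_scal, <- E_plus. apply E_ext.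
  intros h Hh. destruct (rpaths_in _ h Hh) as [L M].
  set (X := erw_pos h).
  transitivity (sumL steps (fun v => sqnorm X * (Wt p q p' q' r eps h v * 1) +
      (2 * (Wt p q p' q' r eps h v * dot X v) + Wt p q p' q' r eps h v * sqnorm v))).
  - apply sumL_ext. intros v _.
    change (erw_pos (v :: h)) with (vadd v X). rewrite sq_vadd. ring.
  - rewrite !sumL_plus, !sumL_scal, W_one; auto.
    2:{ intros ->. simpl in L. lia. }
    rewrite (W_sum p q p' q' r eps h (fun v => dot X v)).
    rewrite (sumL_ext h _ (fun u => (p - q) * dot X u + (p' - q') * dot (rotAinv X) u))
      by (intros u Hu; apply K_sum3; auto).
    rewrite sumL_plus, !sumL_scal, !sum_dot. fold X. rewrite dot_self, dot_rot, L.
    assert (INR t <> 0) by (apply not_0_INR; lia). cbn [erw_step hd]. field. auto.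
Qed.

Theorem mainTheorem11
  (p q p' q' r eps s1 s2 s3 s4 : R)
  (hp : 0 < p < 1) (hq : 0 < q < 1) (hp' : 0 < p' < 1) (hq' : 0 < q' < 1)
  (hr : 0 < r < 1) (hsum : p + q + p' + q' + r = 1)
  (heps : 0 < eps < 1)
  (hs1 : 0 < s1 < 1) (hs2 : 0 < s2 < 1) (hs3 : 0 < s3 < 1) (hs4 : 0 < s4 < 1)
  (hssum : s1 + s2 + s3 + s4 = 1)
  (hne : eps + r <> 1) :
  let gamma := p - q in
  let C := r / ((eps + r) * Gamma (1 - eps - r)) in
  (forall t : nat, (1 <= t)%nat ->
     expect p q p' q' r eps s1 s2 s3 s4 t (fun h => sqnorm (erw_step h))
     = C * Gamma (INR t - eps - r) / Gamma (INR t) + eps / (eps + r)) /\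
  (-(1/2) < gamma < 1 -> gamma <> 1/2 -> 2 * gamma <> 1 - eps - r ->
   let invG2g := if Req_EM_T gamma 0 then 0 else / Gamma (2 * gamma) in
   let D := - invG2g *
       (eps / ((eps + r) * (1 - 2 * gamma))
        + r / ((eps + r) * (1 - eps - r - 2 * gamma))) in
   forall t : nat, (1 <= t)%nat ->
     expect p q p' q' r eps s1 s2 s3 s4 t (fun h => sqnorm (erw_pos h))
     = eps / ((1 - 2 * gamma) * (eps + r)) * INR t
       + C / (1 - eps - r - 2 * gamma)
           * (Gamma (INR t + 1 - eps - r) / Gamma (INR t))
       + D * (Gamma (INR t + 2 * gamma) / Gamma (INR t))).
Proof.
  intros gamma C.
  assert (Hc : eps + r <> 0) by lra.
  assert (Hc1 : 1 - (eps + r) <> 0) by lra.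
  assert (Hb0 : okG (1 - (eps + r))) by (apply ok_all; lra).
  pose proof (Gamma_nz _ Hb0) as HG0.
  assert (Claim1 : forall n,
    expect p q p' q' r eps s1 s2 s3 s4 (S n) (fun h => sqnorm (erw_step h)) =
      r / (eps + r) * Pm (1 - (eps + r)) n / Pm 1 n + eps / (eps + r) /\
    expect p q p' q' r eps s1 s2 s3 s4 (S n) (fun h => sumL h sqnorm) =
      r / ((eps + r) * (1 - (eps + r))) * Pm (1 - (eps + r)) (S n) / Pm 1 n
      + eps * (INR n + 1) / (eps + r)).
  { induction n as [|n [IH1 IH2]].
    - rewrite !E_1. unfold sqnorm, erw_step, sumL. simpl. cbn [Pm]. simpl INR.
      split; replace s4 with (1 - s1 - s2 - s3) by lra; field; auto.
    - pose proof (Pm_pos1 n). pose proof (pos_INR n).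
      assert (A : expect p q p' q' r eps s1 s2 s3 s4 (S (S n)) (fun h => sqnorm (erw_step h)) =
        r / (eps + r) * Pm (1 - (eps + r)) (S n) / Pm 1 (S n) + eps / (eps + r)).
      { rewrite A_step by (auto; lia). rewrite IH2. cbn [Pm]. rewrite !S_INR.
        field. repeat split; lra. }
      split; [exact A|].
      rewrite S_step by (auto; lia). rewrite A, IH2. cbn [Pm]. rewrite !S_INR.
      field. repeat split; lra. }
  split.
  - intros t Ht. destruct t as [|n]; [lia|].
    destruct (Claim1 n) as [A _]. rewrite A.
    replace (INR (S n) - eps - r) with (1 - (eps + r) + INR n) by (rewrite S_INR; ring).
    destruct (Gamma_shift_m _ n Hb0 Hc1) as [_ E]. rewrite E, Gamma_nat.
    unfold C. replace (1 - eps - r) with (1 - (eps + r)) by ring.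
    pose proof (Pm_pos1 n). field. repeat split; lra.
  - intros Hg1 Hg2 Hg3 invG2g D t Ht.
    assert (H2g : 1 - 2 * gamma <> 0) by lra.
    assert (H3g : 1 - (eps + r) - 2 * gamma <> 0) by lra.
    set (K := eps / ((eps + r) * (1 - 2 * gamma))
        + r / ((eps + r) * (1 - eps - r - 2 * gamma))).
    assert (Claim2 : forall n,
      expect p q p' q' r eps s1 s2 s3 s4 (S n) (fun h => sqnorm (erw_pos h)) =
      eps / ((1 - 2 * gamma) * (eps + r)) * (INR n + 1)
      + r / ((eps + r) * (1 - (eps + r) - 2 * gamma)) * Pm (1 - (eps + r)) (S n) / Pm 1 n
      - K * Pm (2 * gamma) (S n) / Pm 1 n).
    { unfold K. replace (1 - eps - r - 2 * gamma) with (1 - (eps + r) - 2 * gamma) by ring.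
      induction n as [|n IH].
      - rewrite E_1. unfold sqnorm, erw_pos, vadd, vzero. simpl. cbn [Pm]. simpl INR.
        unfold gamma. replace s4 with (1 - s1 - s2 - s3) by lra. field. repeat split; auto.
      - pose proof (Pm_pos1 n). pose proof (pos_INR n).
        rewrite X_step by (auto; lia). rewrite IH.
        destruct (Claim1 (S n)) as [A _]. rewrite A. fold gamma.
        cbn [Pm]. rewrite !S_INR.
        field. repeat split; lra. }
    destruct t as [|n]; [lia|]. rewrite Claim2.
    pose proof (Pm_pos1 n).
    replace (INR (S n) + 1 - eps - r) with (1 - (eps + r) + INR (S n)) by ring.
    destruct (Gamma_shift_m _ (S n) Hb0 Hc1) as [_ E]. rewrite E, Gamma_nat.
    unfold D, invG2g, C. fold K.
    replace (1 - eps - r) with (1 - (eps + r)) by ring.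
    destruct (Req_EM_T gamma 0) as [Hz|Hz].
    + rewrite Hz. replace (2 * 0) with 0 by ring. rewrite Pm_0.
      rewrite S_INR. field. repeat split; lra.
    + assert (Hok : okG (2 * gamma)) by (apply ok_all; lra).
      pose proof (Gamma_nz _ Hok).
      replace (INR (S n) + 2 * gamma) with (2 * gamma + INR (S n)) by ring.
      destruct (Gamma_shift_m _ (S n) Hok ltac:(lra)) as [_ E2]. rewrite E2.
      rewrite S_INR. field. repeat split; lra.
Qed.
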